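(* Let $(X_i,A_i,Y_i)_{1\le i\le n}$ be random with $X_i\in\mathcal X$, $A_i\in\{0,1\}$, $Y_i\in\mathcal Y$, and let $X'_1,\dots,X'_M$ be the distinct values among $X_1,\dots,X_n$. Suppose that, conditionally on $(X_{1:n},A_{1:n})$, the joint distribution of $(Y_1,\dots,Y_n)$ is invariant under every permutation of $[n]$ that maps each block $I_k=\{i: X_i=X'_k\}$ to itself ($k\in[M]$). Let $s:\mathcal X\times\mathcal Y\to\mathbb R$ be a fixed measurable score function and $S_i=s(X_i,Y_i)$. If $N^{(0)}\ge1$, define for every $x\in\mathcal X$ $$\hat C(x)=\Big\{y\in\mathcal Y:\ s(x,y)\le Q_{1-\alpha}\Big(\sum_{k=1}^M\sum_{i\in I_k^1}\frac{1}{N^{(0)}}\frac{N_k^0}{N_k}\delta_{S_i}+\frac{1}{N^{(0)}}\sum_{k=1}^M\frac{(N_k^0)^2}{N_k}\delta_{+\infty}\Big)\Big\},$$ and if $N^{(0)}=0$ let $\hat C(x)=\mathcal Y$. Then $$\mathbb E\Big[\frac{1}{N^{(0)}}\sum_{i\in I_{A=0}}\mathbf 1\{Y_i\in\hat C(X_i)\}\ \Big|\ X_{1:n},A_{1:n}\Big]\ge 1-\alpha.$$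
   Context: $Y_i$ is observed only when $A_i=1$. $I_{A=0}=\{i\in[n]:A_i=0\}$, $N^{(0)}=|I_{A=0}|$. For $k\in[M]$: $I_k=\{i:X_i=X'_k\}$, $I_k^0=\{i\in I_k:A_i=0\}$, $I_k^1=\{i\in I_k:A_i=1\}$, $N_k=|I_k|$, $N_k^0=|I_k^0|$. For a distribution $P$ on $\mathbb R\cup\{+\infty\}$ and $\alpha\in(0,1)$, $Q_{1-\alpha}(P)=\inf\{t\in\mathbb R: \mathbb P_{T\sim P}(T\le t)\ge1-\alpha\}$ (possibly $+\infty$); $\delta_v$ is the point mass at $v$. The coverage proportion $\frac{1}{N^{(0)}}\sum_{i\in I_{A=0}}\mathbf 1\{Y_i\in\hat C(X_i)\}$ is defined to equal $1$ when $N^{(0)}=0$. *)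

(* Defs.v *)
From HB Require Import structures.
From mathcomp Require Import all_boot all_order all_algebra all_fingroup.
From mathcomp Require Import all_classical all_reals all_analysis.
Set Implicit Arguments. Unset Strict Implicit. Unset Printing Implicit Defensive.
Import Order.TTheory GRing.Theory Num.Theory.
Local Open Scope classical_set_scope.
Local Open Scope ring_scope.

(* Q_{1-alpha}(P) for a finitely supported distribution
   P = sum_{(w,v) in d} w * delta_v on R \cup {+oo}:
   inf { t in R : P(T <= t) >= 1 - alpha }, in \bar R (inf of empty = +oo). *)
Definition quantile (R : realType) (alpha : R) (d : seq (R * \bar R)) : \bar R :=
  ereal_inf [set (t%:E)%E | t in
     [set t : R | 1 - alpha <= \sum_(p <- d | (p.2 <= t%:E)%E) p.1]].

Section Conformal.
Variables (R : realType) (dX dY : measure_display)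
  (TX : measurableType dX) (TY : measurableType dY) (n : nat).
Variables (X : 'I_n -> TX) (A : 'I_n -> bool) (s : TX -> TY -> R) (alpha : R).

Definition distinctX : seq TX := undup [seq X i | i <- enum 'I_n].
Definition Nblk (x : TX) : nat := #|[set i : 'I_n | X i == x]|.
Definition N0blk (x : TX) : nat := #|[set i : 'I_n | (X i == x) && ~~ A i]|.
Definition N0 : nat := #|[set i : 'I_n | ~~ A i]|.

Definition wdist (y : 'I_n -> TY) : seq (R * \bar R) :=
  [seq ((N0%:R)^-1 * ((N0blk (X i))%:R / (Nblk (X i))%:R), (s (X i) (y i))%:E)
    | i <- enum 'I_n & A i]
  ++ [seq ((N0%:R)^-1 * ((N0blk x)%:R ^+ 2 / (Nblk x)%:R), +oo%E) | x <- distinctX].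

Definition Chat (y : 'I_n -> TY) (x : TX) : set TY :=
  if N0 == 0%N then setT
  else [set v | ((s x v)%:E <= quantile alpha (wdist y))%E].

Definition coverage (y : 'I_n -> TY) : R :=
  if N0 == 0%N then 1
  else (N0%:R)^-1 * \sum_(i < n | ~~ A i) (\1_(Chat y (X i)) (y i) : R).

End Conformal.

Definition block_perm (TX : eqType) (n : nat) (X : 'I_n -> TX) (sg : {perm 'I_n}) :=
  forall i, X (sg i) = X i.

(* Main.v *)
Require Import Defs.
From HB Require Import structures.
From mathcomp Require Import all_boot all_order all_algebra all_fingroup.
From mathcomp Require Import all_classical all_reals all_analysis.
Import Order.TTheory GRing.Theory Num.Theory.
Local Open Scope classical_set_scope.
Local Open Scope ring_scope.


Definition Rect (dY : measure_display) (TY : measurableType dY) (n : nat) :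
  set (set ('I_n -> TY)) :=
  [set \bigcap_(i in setT) (fun z => z i) @^-1` B i
    | B in [set B : 'I_n -> set TY | forall i, measurable (B i)]].
Definition FT (dY : measure_display) (TY : measurableType dY) (n : nat) :=
  g_sigma_algebraType (@Rect dY TY n).

Lemma mono_int (R : realType) (dO : measure_display) (Omega : measurableType dO)
  (P : {measure set Omega -> \bar R}) (f g : Omega -> \bar R) :
  (forall x, (0 <= f x)%E) -> (forall x, (f x <= g x)%E) ->
  (\int[P]_x f x <= \int[P]_x g x)%E.
Proof.
move=> f0 fg.
have g0 x : (0 <= g x)%E by apply: le_trans (fg x).
rewrite !ge0_integralE //; apply: ereal_sup_le => _ [h hf <-]; exists h => //.
move=> x; apply: le_trans (hf x) _; rewrite !patch_setT; exact: fg.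
Qed.

Lemma exch (R : realType) (dO dY : measure_display)
  (Omega : measurableType dO) (TY : measurableType dY)
  (P : probability Omega R) (n : nat) (Y : 'I_n -> Omega -> TY) (sg : 'I_n -> 'I_n) :
  (forall i, measurable_fun setT (Y i)) ->
  (forall B : 'I_n -> set TY, (forall i, measurable (B i)) ->
       P (\bigcap_(i in setT) (Y (sg i) @^-1` B i))
       = P (\bigcap_(i in setT) (Y i @^-1` B i))) ->
  forall C : set (@FT dY TY n), measurable C ->
  [/\ measurable [set w | C (fun i => Y i w)],
      measurable [set w | C (fun i => Y (sg i) w)] &
      P [set w | C (fun i => Y (sg i) w)] = P [set w | C (fun i => Y i w)]].
Proof.
move=> mY hex.
pose H := [set C : set ('I_n -> TY) | [/\ measurable [set w | C (fun i => Y i w)],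
      measurable [set w | C (fun i => Y (sg i) w)] &
      P [set w | C (fun i => Y (sg i) w)] = P [set w | C (fun i => Y i w)]]].
have mpre (Z : 'I_n -> Omega -> TY) B : (forall i, measurable_fun setT (Z i)) ->
    (forall i, measurable (B i)) ->
    measurable (\bigcap_(i in setT) (Z i @^-1` B i)).
  move=> mZ mB; apply: fin_bigcap_measurable; first exact: finite_finset.
  by move=> i _; rewrite -[X in measurable X]setTI; apply: mZ.
have mYs : forall i, measurable_fun setT (Y (sg i)) by move=> i; apply: mY.
move=> C mC.
suff: <<s @Rect dY TY n >> `<=` H by move=> /(_ C mC).
apply: lambda_system_subset.
- move=> _ _ [B mB <-] [B' mB' <-]; exists (fun i => B i `&` B' i).
    by move=> i; apply: measurableI.
  by rewrite -bigcapI; apply: eq_bigcapr => i _.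
- split.
  + by [].
  + by split => //=; exact: measurableT.
  + move=> A B BA [mA1 mA2 eA] [mB1 mB2 eB]; split.
    * exact: (measurableD mA1 mB1).
    * exact: (measurableD mA2 mB2).
    * have e1 : [set w | (A `\` B) (fun i => Y (sg i) w)] =
         [set w | A (fun i => Y (sg i) w)] `\` [set w | B (fun i => Y (sg i) w)] by [].
      have e2 : [set w | (A `\` B) (fun i => Y i w)] =
         [set w | A (fun i => Y i w)] `\` [set w | B (fun i => Y i w)] by [].
      rewrite e1 e2 !measureD //; try exact: fin_num_lty.
      rewrite !setIidr.
      * exact: (congr2 (fun a b => (a - b)%E) eA eB).
      * by move=> w /= /BA.
      * by move=> w /= /BA.
      * by apply: le_lt_trans (probability_le1 _ _) _ => //; rewrite ltry.
      * by apply: le_lt_trans (probability_le1 _ _) _ => //; rewrite ltry.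
  + move=> F ndF HF; split.
    * have -> : [set w | (\bigcup_i F i) (fun i => Y i w)] =
         \bigcup_i [set w | F i (fun j => Y j w)] by [].
      by apply: bigcupT_measurable => i; case: (HF i).
    * have -> : [set w | (\bigcup_i F i) (fun i => Y (sg i) w)] =
         \bigcup_i [set w | F i (fun j => Y (sg j) w)] by [].
      by apply: bigcupT_measurable => i; case: (HF i).
    * have e1 : [set w | (\bigcup_i F i) (fun i => Y (sg i) w)] =
         \bigcup_i [set w | F i (fun j => Y (sg j) w)] by [].
      have e2 : [set w | (\bigcup_i F i) (fun i => Y i w)] =
         \bigcup_i [set w | F i (fun j => Y j w)] by [].
      rewrite e1 e2.
      have c1 := @nondecreasing_cvg_mu _ _ _ P (fun i => [set w | F i (fun j => Y (sg j) w)]).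
      have c2 := @nondecreasing_cvg_mu _ _ _ P (fun i => [set w | F i (fun j => Y j w)]).
      rewrite -(cvg_lim _ (c1 _ _ _)); first rewrite -(cvg_lim _ (c2 _ _ _)).
      - by congr (limn _); apply/funext => k /=; case: (HF k).
      all: try by move=> i; case: (HF i).
      all: try (by apply: bigcupT_measurable => i; case: (HF i)).
      all: try (by move=> a b ab; apply/subsetPset => w /=; move: (ndF _ _ ab) => /subsetPset; apply).
      all: try exact: ereal_hausdorff.
- move=> _ [B mB <-]; split.
  + exact: (mpre Y B mY mB).
  + exact: (mpre _ B mYs mB).
  + exact: (hex B mB).
- by [].
Qed.


Lemma measC (R : realType) (dX dY : measure_display)
  (TX : measurableType dX) (TY : measurableType dY) (n : nat)
  (X : 'I_n -> TX) (s : TX -> TY -> R) (w : 'I_n -> R) (c : R) (i : 'I_n) :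
  measurable_fun setT (fun p : TX * TY => s p.1 p.2) ->
  measurable ([set z : @FT dY TY n |
     \sum_l w l * ((s (X l) (z l) < s (X i) (z i))%R)%:R < c]).
Proof.
move=> ms.
have mproj l : measurable_fun setT (fun z : @FT dY TY n => z l).
  move=> _ B mB; rewrite setTI; apply: sub_sigma_algebra.
  exists (fun j => if j == l then B else setT).
    by move=> j; case: ifP => _ //; exact: measurableT.
  apply/seteqP; split => z /=.
    by move=> /(_ l I); rewrite eqxx.
  by move=> Bz j _; case: ifP => // /eqP ->.
have msec x : measurable_fun setT (s x).
  have -> : s x = (fun p => s p.1 p.2) \o pair x by [].
  exact: measurableT_comp ms (pair1_measurable x).
have mf l : measurable_fun setT (fun z : @FT dY TY n => s (X l) (z l)).
  exact: measurableT_comp (msec _) (mproj l).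
have mb : measurable_fun setT (fun b : bool => (b%:R : R)) by [].
have mg : measurable_fun setT (fun z : @FT dY TY n =>
     \sum_l w l * ((s (X l) (z l) < s (X i) (z i))%R)%:R).
  apply: measurable_sum => l; apply: measurable_realfun.measurable_funM; first exact: measurable_cst.
  exact: measurableT_comp mb (measurable_realfun.measurable_fun_ltr (mf l) (mf i)).
have := mg measurableT _ (measurable_itv `]-oo, c[); rewrite setTI.
congr measurable; apply/seteqP; split => z /=; by rewrite in_itv /=.
Qed.

Import measurable_realfun.


Lemma Pfin (R : realType) (dO : measure_display) (Omega : measurableType dO)
  (P : probability Omega R) (A : set Omega) : measurable A -> P A \is a fin_num.
Proof.
move=> mA; rewrite ge0_fin_numE //.
by apply: le_lt_trans (probability_le1 _ _) _ => //; rewrite ltry.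
Qed.

Lemma Lint (R : realType) (dO : measure_display) (Omega : measurableType dO)
  (P : probability Omega R) (n : nat) (c : 'I_n -> R) (E : 'I_n -> set Omega) :
  (forall l, 0 <= c l) -> (forall l, measurable (E l)) ->
  (\int[P]_x (\sum_l (c l * \1_(E l) x)%:E) = (\sum_l c l * fine (P (E l)))%:E)%E.
Proof.
move=> c0 mE.
rewrite ge0_integral_sum //; last first.
- by move=> l x _; rewrite lee_fin mulr_ge0 // indicE.
- move=> l; apply/measurable_EFinP.
  apply: measurable_realfun.measurable_funM; first exact: measurable_cst.
  exact: measurable_indic.
rewrite -sumEFin; apply: eq_bigr => l _.
under eq_integral do rewrite EFinM.
rewrite ge0_integralZl //.
- by rewrite integral_indic // setIT EFinM fineK ?Pfin.
- by apply/measurable_EFinP; exact: measurable_indic.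
- by rewrite lee_fin.
Qed.


Lemma Lpoint (R : realType) (n : nat) (z w : 'I_n -> R) (c : R) :
  (forall l, 0 <= w l) -> \sum_l w l = 1 -> c <= 1 ->
  c <= \sum_j w j * ((\sum_l w l * ((z l < z j)%R)%:R < c)%R)%:R.
Proof.
move=> w0 w1 c1.
set E := fun j => (\sum_l w l * ((z l < z j)%R)%:R < c)%R.
have [j0 hj0|hall] := pickP (fun j => ~~ E j).
- case: (@arg_minP _ _ _ j0 (fun j => ~~ E j) z hj0) => l0 nE0 minl0.
  apply: le_trans (_ : \sum_l w l * ((z l < z l0)%R)%:R <= _).
    by rewrite leNgt; exact: nE0.
  apply: ler_sum => l _.
  have [zl|] := boolP (z l < z l0)%R; last first.
    by rewrite mulr0 mulr_ge0 // ler0n.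
  have El : E l.
    apply: contraT => nEl; move: (minl0 l nEl).
    by rewrite leNgt zl.
  by rewrite /E in El; rewrite El.
- rewrite (eq_bigr w) ?w1 // => j _.
  by move: (hall j); rewrite /E /= => /negbFE ->; rewrite mulr1.
Qed.

Lemma cardR (R : realType) (n : nat) (P : pred 'I_n) :
  (#|[set i : 'I_n | P i]%classic|%:R : R) = \sum_i (P i)%:R.
Proof.
rewrite -sum1_card natr_sum big_mkcond /=.
apply: eq_bigr => i _.
have -> : (i \in [set i0 | P i0]%classic) = P i by apply/idP/idP; rewrite inE.
by case: (P i).
Qed.

Lemma Lblock (R : realType) (dX : measure_display) (TX : measurableType dX)
  (n : nat) (X : 'I_n -> TX) (A : 'I_n -> bool) (p : 'I_n -> R) :
  \sum_l (N0blk X A (X l))%:R / (Nblk X (X l))%:R * p l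
  = \sum_i (~~ A i)%:R * (\sum_l (X l == X i)%:R * p l / (Nblk X (X i))%:R).
Proof.
rewrite /N0blk.
rewrite (eq_bigr (fun l => \sum_i ((X i == X l) && ~~ A i)%:R / (Nblk X (X l))%:R * p l)); last first.
  move=> l _; rewrite -!mulr_suml; congr (_ / _ * _); exact: (@cardR R n (fun i => (X i == X l) && ~~ A i)).
rewrite exchange_big /=; apply: eq_bigr => i _.
rewrite mulr_sumr; apply: eq_bigr => l _.
case: (eqVneq (X l) (X i)) => [e|ne].
  by rewrite e /= mul1r mulrA; exact: mulrAC.
by rewrite /= !mul0r mulr0.
Qed.

Lemma Nblk_eq (R : realType) (dX : measure_display) (TX : measurableType dX)
  (n : nat) (X : 'I_n -> TX) (i : 'I_n) :
  \sum_l ((X l == X i)%:R : R) = (Nblk X (X i))%:R.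
Proof. by rewrite /Nblk (@cardR R n (fun l => X l == X i)). Qed.

Lemma Nblk_neq0 (R : realType) (dX : measure_display) (TX : measurableType dX)
  (n : nat) (X : 'I_n -> TX) (i : 'I_n) : (Nblk X (X i))%:R != 0 :> R.
Proof.
rewrite -(Nblk_eq R) (bigD1 i) //= eqxx.
by rewrite gt_eqF // ltr_pwDl // ?ltr01 // sumr_ge0 // => l _; rewrite ler0n.
Qed.

Lemma Lexch (R : realType) (dX : measure_display) (TX : measurableType dX)
  (n : nat) (X : 'I_n -> TX) (A : 'I_n -> bool) (p : 'I_n -> R) :
  (forall i l, X l = X i -> p l = p i) ->
  \sum_l (N0blk X A (X l))%:R / (Nblk X (X l))%:R * p l
  = \sum_i (~~ A i)%:R * p i.
Proof.
move=> hp; rewrite Lblock; apply: eq_bigr => i _; congr (_ * _).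
rewrite (eq_bigr (fun l => (X l == X i)%:R * p i / (Nblk X (X i))%:R)); last first.
  by move=> l _; case: (eqVneq (X l) (X i)) => [e|]; [rewrite (hp _ _ e)|rewrite !mul0r].
by rewrite -!mulr_suml Nblk_eq mulrAC divff ?mul1r // Nblk_neq0.
Qed.

Lemma N0E (R : realType) (n : nat) (A : 'I_n -> bool) :
  (N0 A)%:R = \sum_i ((~~ A i)%:R : R).
Proof. by rewrite /N0 (@cardR R n (fun i => ~~ A i)). Qed.


Lemma Lquant (R : realType) (dX dY : measure_display)
  (TX : measurableType dX) (TY : measurableType dY) (n : nat)
  (X : 'I_n -> TX) (A : 'I_n -> bool) (s : TX -> TY -> R) (alpha : R)
  (y : 'I_n -> TY) (i : 'I_n) :
  \sum_l ((N0 A)%:R^-1 * ((N0blk X A (X l))%:R / (Nblk X (X l))%:R)) *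
     ((s (X l) (y l) < s (X i) (y i))%R)%:R < 1 - alpha ->
  ((s (X i) (y i))%:E <= quantile alpha (wdist X A s y))%E.
Proof.
move=> hlt; apply/ereal_infP => _ [t ht <-]; rewrite lee_fin leNgt.
apply/negP => tlt; move: ht; rewrite /= /wdist big_cat /=.
rewrite [X in (_ <= _ + X) -> _]big_map [X in (_ <= _ + X) -> _]big1 ?addr0; last first.
  by move=> x; rewrite /= leNgt ltry.
rewrite big_map big_filter_cond big_enum_cond /= => ht.
suff : \sum_(l in 'I_n | A l && ((s (X l) (y l))%:E <= t%:E)%E)
          (N0 A)%:R^-1 * ((N0blk X A (X l))%:R / (Nblk X (X l))%:R) < 1 - alpha.
  by rewrite ltNge ht.
apply: le_lt_trans hlt.
rewrite big_mkcond /=; apply: ler_sum => l _.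
have w0 : 0 <= (N0 A)%:R^-1 * ((N0blk X A (X l))%:R / (Nblk X (X l))%:R) :> R.
  by rewrite mulr_ge0 ?invr_ge0 ?ler0n // divr_ge0 ?ler0n.
case: ifP => [/andP[_ lt]|_]; last by rewrite mulr_ge0 ?ler0n.
rewrite lee_fin in lt.
by rewrite (le_lt_trans lt tlt) mulr1.
Qed.

Lemma memb (T : Type) (b : T -> bool) (x : T) : (x \in [set y | b y]) = b x.
Proof. by apply/idP/idP; rewrite inE. Qed.

Theorem theorem1 (R : realType) (dO dX dY : measure_display)
  (Omega : measurableType dO) (TX : measurableType dX) (TY : measurableType dY)
  (P : probability Omega R) (n : nat)
  (X : 'I_n -> TX) (A : 'I_n -> bool) (Y : 'I_n -> Omega -> TY)
  (s : TX -> TY -> R) (alpha : R) :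
  0 < alpha < 1 ->
  (forall i, measurable_fun setT (Y i)) ->
  measurable_fun setT (fun p : TX * TY => s p.1 p.2) ->
  (forall sg : {perm 'I_n}, block_perm X sg ->
     forall B : 'I_n -> set TY, (forall i, measurable (B i)) ->
       P (\bigcap_(i in setT) (Y (sg i) @^-1` B i))
       = P (\bigcap_(i in setT) (Y i @^-1` B i))) ->
  (\int[P]_(w in setT) (coverage X A s alpha (fun i => Y i w))%:E
     >= (1 - alpha)%:E)%E.
Proof.
move=> /andP[a0 a1] mY ms hex.
have [N00|N0n] := eqVneq (N0 A) 0%N.
  have -> : (fun w => (coverage X A s alpha (fun i => Y i w))%:E) = cst 1%:E.
    by apply/funext => w; rewrite /coverage N00.
  rewrite integral_cst // mul1e.
  have h1 : (1 <= P setT)%E by rewrite probability_setT.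
  apply: le_trans h1; rewrite lee_fin.
  by rewrite lerBlDr lerDl ltW.
have Nn0 : (N0 A)%:R != 0 :> R by rewrite pnatr_eq0.
pose w l : R := (N0 A)%:R^-1 * ((N0blk X A (X l))%:R / (Nblk X (X l))%:R).
have w0 l : 0 <= w l.
  by rewrite mulr_ge0 ?invr_ge0 ?ler0n // divr_ge0 ?ler0n.
have w1 : \sum_l w l = 1.
  rewrite -mulr_sumr.
  have := @Lexch R dX TX n X A (fun _ => 1) (fun _ _ _ => erefl).
  under eq_bigr do rewrite mulr1.
  under [in X in _ = X -> _]eq_bigr do rewrite mulr1.
  by move=> ->; rewrite -N0E mulVf.
pose C j : set (@FT dY TY n) :=
  [set z | \sum_l w l * ((s (X l) (z l) < s (X j) (z j))%R)%:R < 1 - alpha].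
pose E j : set Omega := [set om | C j (fun i => Y i om)].
have mC j : measurable (C j) := @measC R dX dY TX TY n X s w (1 - alpha) j ms.
have mE j : measurable (E j).
  by case: (@exch R dO dY Omega TY P n Y id mY (fun B _ => erefl) (C j) (mC j)).
have pE i j : X j = X i -> P (E j) = P (E i).
  move=> e.
  pose sg := tperm i j.
  have bsg : block_perm X sg.
    by move=> k; rewrite /sg; case: tpermP => [->|->|] //.
  case: (@exch R dO dY Omega TY P n Y sg mY (hex sg bsg) (C i) (mC i)) => _ _ <-.
  have sgi : sg i = j by rewrite /sg tpermL.
  have eqS om : \sum_l w l * ((s (X l) (Y (sg l) om) < s (X i) (Y (sg i) om))%R)%:R
     = \sum_l w l * ((s (X l) (Y l om) < s (X j) (Y j om))%R)%:R.
    rewrite [RHS](reindex_inj (@perm_inj _ sg)) /= sgi -e.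
    by apply: eq_bigr => l _; rewrite /w (bsg l).
  by congr (P _); apply/seteqP; split => om; rewrite /E /C /= eqS.
pose p j := fine (P (E j)).
have pEq i l : X l = X i -> p l = p i by move=> e; rewrite /p (pE i l e).
have iE j om : \1_(E j) om = ((\sum_l w l * ((s (X l) (Y l om) < s (X j) (Y j om))%R)%:R
     < 1 - alpha)%R)%:R :> R.
  rewrite indicE; congr (_%:R); congr nat_of_bool; apply/idP/idP; rewrite inE //.
have c0 i : 0 <= (N0 A)%:R^-1 * (~~ A i)%:R :> R by rewrite mulr_ge0 ?invr_ge0 ?ler0n.
have step1 : (\int[P]_om (\sum_i (((N0 A)%:R^-1 * (~~ A i)%:R) * \1_(E i) om)%:E)
   <= \int[P]_om (coverage X A s alpha (fun i => Y i om))%:E)%E.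
  apply: mono_int => om.
  - by apply: sume_ge0 => i _; rewrite lee_fin mulr_ge0 // indicE.
  rewrite sumEFin lee_fin /coverage (negbTE N0n) mulr_sumr [X in _ <= X]big_mkcond /=.
  apply: ler_sum => i _; case: (A i) => /=.
    by rewrite mulr0 !mul0r.
  rewrite mulr1 ler_wpM2l ?invr_ge0 ?ler0n // [X in X <= _]indicE indicE.
  have [Eom|] := boolP (om \in E i); last by rewrite ler0n.
  rewrite mem_set // /Chat (negbTE N0n) /=.
  apply: Lquant; move: Eom; rewrite inE /E /C /w /=; exact.
have step2 := @Lint R dO Omega P n (fun i => (N0 A)%:R^-1 * (~~ A i)%:R) E c0 mE.
have step3 : \sum_i ((N0 A)%:R^-1 * (~~A i)%:R) * p i = \sum_l w l * p l.
  rewrite /w; under [RHS]eq_bigr do rewrite -mulrA.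
  rewrite -mulr_sumr Lexch // mulr_sumr.
  by apply: eq_bigr => i _; rewrite mulrA.
have step4 := @Lint R dO Omega P n w E w0 mE.
have step5 : ((1 - alpha)%:E <= \int[P]_om (\sum_l (w l * \1_(E l) om)%:E))%E.
  have hm : (\int[P]_om (fun _ => (1 - alpha)%:E) om
      <= \int[P]_om (\sum_l (w l * \1_(E l) om)%:E))%E.
    apply: mono_int.
    - by move=> _; rewrite lee_fin subr_ge0 ltW.
    move=> om; rewrite sumEFin lee_fin.
    have := @Lpoint R n (fun l => s (X l) (Y l om)) w (1 - alpha) w0 w1.
    have -> : \sum_j w j * \1_(E j) om =
      \sum_j w j * ((\sum_l w l * ((s (X l) (Y l om) < s (X j) (Y j om))%R)%:R
     < 1 - alpha)%R)%:R by apply: eq_bigr => j _; rewrite iE.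
    by apply; rewrite lerBlDr lerDl ltW.
  apply: le_trans hm.
  rewrite integral_cst //.
  have h2 : ((1 - alpha)%:E * 1 <= (1 - alpha)%:E * P setT)%E.
    by rewrite probability_setT.
  by rewrite mule1 in h2; apply: le_trans h2.
apply: le_trans step5 _.
rewrite step4 -step3 -step2.
exact: step1.
Qed.
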